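(* Let $p=p_1p_2\cdots p_n$ be a permutation avoiding the pattern $1324$, and let $w(p)$ and $z(p)$ be the two words of length $n$ over $\{A,B,C,D\}$ defined in the context. Then for every $i\geq 1$: if the $i$th letter $A$ from the right in $w(p)$ is in the middle of a $CAB$-factor (i.e., it is immediately preceded by a letter $C$ and immediately followed by a letter $B$), then the $i$th segment of $z(p)$ from the left contains a letter $B$.
   Context: A permutation $p$ avoids $1324$ if there are no indices $i_1<i_2<i_3<i_4$ with $p_{i_1}<p_{i_3}<p_{i_2}<p_{i_4}$. An entry $p_i$ is a left-to-right minimum if it is smaller than all entries to its left, and a right-to-left maximum if it is larger than all entries to its right (these notions are also applied to subsequences). Coloring: scan $p$ from left to right; color $p_i$ blue if coloring it red would create a $132$-pattern consisting entirely of red entries (among the previously colored red entries together with $p_i$); otherwise color $p_i$ red. Then mark each entry with a letter: (1) a red entry that is a left-to-right minimum of the subsequence of red entries gets $A$; (2) a red entry that is not such a left-to-right minimum gets $B$; (3) a blue entry that is not a right-to-left maximum of the subsequence of blue entries gets $C$; (4) a blue entry that is a right-to-left maximum of the subsequence of blue entries gets $D$; (4') finally, every entry that is a right-to-left maximum of all of $p$ but not a left-to-right minimum of $p$ is colored blue and marked $D$, regardless of the earlier rules. The word $w(p)$ has as its $i$th letter the letter of $p_i$; the word $z(p)$ has as its $i$th letter the letter of the entry of value $i$. A segment of a word $v$ over $\{A,B,C,D\}$ is a factor (consecutive letters) that starts with a letter $A$ and ends immediately before the next letter $A$, or at the end of $v$. The $i$th segment from the left is the one starting at the $i$th letter $A$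 from the left. *)

(* Defs.v *)
(* Permutations are sequences of naturals that are
   permutations of 1..n; positions are 0-indexed. *)
From HB Require Import structures.
From mathcomp Require Import all_boot.
Set Implicit Arguments. Unset Strict Implicit. Unset Printing Implicit Defensive.

Inductive letter := LA | LB | LC | LD.

Definition letter_eqb (x y : letter) : bool :=
  match x, y with
  | LA, LA | LB, LB | LC, LC | LD, LD => true
  | _, _ => false
  end.

Lemma letter_eqP : Equality.axiom letter_eqb.
Proof. by case; case; constructor. Qed.

HB.instance Definition _ := hasDecEq.Build letter letter_eqP.

Definition is_perm (p : seq nat) : Prop := perm_eq p (iota 1 (size p)).

Definition contains1324 (p : seq nat) : Prop :=
  exists i1 i2 i3 i4, [/\ i1 < i2, i2 < i3, i3 < i4, i4 < size p &
    [/\ nth 0 p i1 < nth 0 p i3, nth 0 p i3 < nth 0 p i2 & nth 0 p i2 < nth 0 p i4]].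

Definition avoids1324 (p : seq nat) : Prop := ~ contains1324 p.

Definition has132 (s : seq nat) : bool :=
  has (fun i => has (fun j => has (fun k =>
     [&& i < j, j < k, nth 0 s i < nth 0 s k & nth 0 s k < nth 0 s j])
     (iota 0 (size s))) (iota 0 (size s))) (iota 0 (size s)).

(* red/blue colouring, scanning left to right; [reds] = red entries so far.
   true = red, false = blue. *)
Fixpoint colour_aux (reds : seq nat) (s : seq nat) : seq bool :=
  match s with
  | [::] => [::]
  | x :: s' =>
      if has132 (rcons reds x) then false :: colour_aux reds s'
      else true :: colour_aux (rcons reds x) s'
  end.

Definition colours (p : seq nat) : seq bool := colour_aux [::] p.

Definition is_red (p : seq nat) (j : nat) : bool := nth false (colours p) j.

Definition lrmin (p : seq nat) (i : nat) : bool :=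
  all (fun j => nth 0 p i < nth 0 p j) (iota 0 i).
Definition rlmax (p : seq nat) (i : nat) : bool :=
  all (fun j => nth 0 p j < nth 0 p i) (iota i.+1 (size p - i.+1)).

Definition letter_at (p : seq nat) (i : nat) : letter :=
  if rlmax p i && ~~ lrmin p i then LD
  else if is_red p i then
    (if all (fun j => is_red p j ==> (nth 0 p i < nth 0 p j)) (iota 0 i)
     then LA
     else LB)
  else if all (fun j => ~~ is_red p j ==> (nth 0 p j < nth 0 p i))
              (iota i.+1 (size p - i.+1))
     then LD
     else LC.

Definition wword (p : seq nat) : seq letter :=
  map (letter_at p) (iota 0 (size p)).

Definition zword (p : seq nat) : seq letter :=
  map (fun v => letter_at p (index v p)) (iota 1 (size p)).

Definition posA (v : seq letter) : seq nat :=
  [seq k <- iota 0 (size v) | nth LD v k == LA].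

(* the (i+1)-th segment of v from the left (i is 0-indexed): from the
   (i+1)-th A up to (not including) the next A, or to the end of v *)
Definition segment (v : seq letter) (i : nat) : seq letter :=
  let a := posA v in
  let s := nth 0 a i in
  let e := nth (size v) a i.+1 in
  take (e - s) (drop s v).

(* Main.v *)
Require Import Defs.
From mathcomp Require Import all_boot.
From mathcomp Require Import zify.
Set Implicit Arguments. Unset Strict Implicit. Unset Printing Implicit Defensive.

Lemma has132P s : reflect (exists i j k, [/\ i < j, j < k, k < size s &
   nth 0 s i < nth 0 s k < nth 0 s j]) (has132 s).
Proof.
apply: (iffP idP).
- case/hasP => i; rewrite mem_iota => /andP[_ Hi] /hasP[j]; rewrite mem_iota => /andP[_ Hj].
  case/hasP => k; rewrite mem_iota => /andP[_ Hk] /and4P[h1 h2 h3 h4].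
  exists i, j, k; split; try lia; by rewrite h3 h4.
- case=> i [j [k [h1 h2 h3 /andP[h4 h5]]]].
  apply/hasP; exists i; first by rewrite mem_iota; lia.
  apply/hasP; exists j; first by rewrite mem_iota; lia.
  apply/hasP; exists k; first by rewrite mem_iota; lia.
  by rewrite h1 h2 h4 h5.
Qed.

Lemma has132_rcons_end R y a b : a < b -> b < size R ->
  nth 0 R a < y < nth 0 R b -> has132 (rcons R y).
Proof.
move=> hab hb hy; apply/has132P; exists a, b, (size R).
rewrite size_rcons !nth_rcons ltnn eqxx (ltn_trans hab hb) hb; split => //.
Qed.

Lemma has132_rcons_inv R y : has132 (rcons R y) -> has132 R \/
  exists a b, [/\ a < b, b < size R & nth 0 R a < y < nth 0 R b].
Proof.
case/has132P => i [j [k [hij hjk hk]]]; rewrite size_rcons in hk; rewrite !nth_rcons.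
have hj : j < size R by lia.
have hi : i < size R by lia.
rewrite hi hj.
case: (ltnP k (size R)) => hkR hv.
- by left; apply/has132P; exists i, j, k; split.
- have e : (k == size R) = true by apply/eqP; lia.
  by rewrite e in hv; right; exists i, j; split.
Qed.

Lemma shift_filter (b : bool) c (xs : seq nat) x j :
  map (nth 0 (x :: xs)) [seq t <- iota 0 j.+1 | nth false (b :: c) t] =
  (if b then [:: x] else [::]) ++ map (nth 0 xs) [seq t <- iota 0 j | nth false c t].
Proof.
have -> : iota 0 j.+1 = 0 :: map (addn 1) (iota 0 j) by rewrite -iotaDl.
rewrite /= filter_map.
have -> : [seq t <- iota 0 j | preim (addn 1) (fun t => nth false (b :: c) t) t] =
          [seq t <- iota 0 j | nth false c t].
  by apply: eq_filter => t /=; rewrite ?add1n.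
have E : [seq nth 0 (x :: xs) i | i <- [seq 1 + i | i <- iota 0 j & nth false c i]]
  = map (nth 0 xs) [seq t <- iota 0 j | nth false c t].
  by rewrite -map_comp; apply: eq_map => t /=; rewrite ?add1n.
by case: b => /=; rewrite E.
Qed.

Lemma colour_aux_nth reds s j : j < size s ->
  nth false (colour_aux reds s) j =
  ~~ has132 (rcons (reds ++ map (nth 0 s)
      [seq t <- iota 0 j | nth false (colour_aux reds s) t]) (nth 0 s j)).
Proof.
elim: s reds j => [|x s IH] reds j //= hj.
case: j hj => [|j] hj.
- by rewrite cats0 /=; case: has132.
- case h: (has132 (rcons reds x)).
  + rewrite shift_filter /=. exact: IH.
  + rewrite shift_filter /= -cat_rcons. exact: IH.
Qed.

Lemma colours_nth p j : j < size p -> is_red p j =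
  ~~ has132 (rcons (map (nth 0 p) [seq t <- iota 0 j | is_red p t]) (nth 0 p j)).
Proof. move=> hj; exact: (colour_aux_nth [::] hj). Qed.

Lemma red_no132 p j t1 t2 : j < size p -> is_red p j -> t1 < t2 -> t2 < j ->
  is_red p t1 -> is_red p t2 -> ~~ (nth 0 p t1 < nth 0 p j < nth 0 p t2).
Proof.
move=> hj hr h12 h2j r1 r2; apply/negP => hv.
move: hr; rewrite colours_nth // => /negP; apply.
set T := [seq t <- iota 0 j | is_red p t].
have mT1 : t1 \in T by rewrite mem_filter r1 mem_iota; lia.
have mT2 : t2 \in T by rewrite mem_filter r2 mem_iota; lia.
have sT : sorted ltn T by apply: sorted_filter; [exact: ltn_trans | exact: iota_ltn_sorted].
have sT' : sorted leq T by apply: sub_sorted sT => a b /ltnW.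
apply: (@has132_rcons_end _ _ (index t1 T) (index t2 T)).
- rewrite ltnNge; apply/negP => hle.
  have := sorted_leq_nth leq_trans leqnn 0 sT'; move=> /(_ (index t2 T) (index t1 T)).
  rewrite !inE !index_mem !nth_index // => /(_ mT2 mT1 hle); lia.
- by rewrite size_map index_mem.
- by rewrite !(nth_map 0) ?index_mem // !nth_index.
Qed.

Lemma blue_132 p j : j < size p -> ~~ is_red p j -> exists t1 t2,
  [/\ t1 < t2, t2 < j, is_red p t1, is_red p t2 & nth 0 p t1 < nth 0 p j < nth 0 p t2].
Proof.
move=> hj; rewrite colours_nth // negbK.
set T := [seq t <- iota 0 j | is_red p t].
have sT : sorted ltn T by apply: sorted_filter; [exact: ltn_trans | exact: iota_ltn_sorted].
have memT : forall a, a < size T -> nth 0 T a < j /\ is_red p (nth 0 T a).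
  move=> a ha; have := mem_nth 0 ha; rewrite mem_filter mem_iota => /andP[-> /andP[_]].
  by rewrite add0n.
have mono : forall a b, a < b -> b < size T -> nth 0 T a < nth 0 T b.
  move=> a b hab hb; apply: (sorted_ltn_nth ltn_trans 0 sT) => //; rewrite inE; lia.
case/has132_rcons_inv.
- case/has132P => a [b [c [hab hbc]]]; rewrite size_map => hc.
  rewrite !(nth_map 0) //; try lia.
  move=> hv; exfalso.
  have [hcj rc] := memT c hc.
  have [_ ra] := memT a ltac:(lia).
  have [_ rb] := memT b ltac:(lia).
  have := red_no132 (ltn_trans hcj hj) rc (mono a b hab ltac:(lia)) (mono b c hbc hc) ra rb.
  by rewrite hv.
- case=> a [b [hab]]; rewrite size_map => hb; rewrite !(nth_map 0) //; try lia.
  move=> hv; exists (nth 0 T a), (nth 0 T b).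
  have [_ ra] := memT a ltac:(lia).
  have [hbj rb] := memT b hb.
  by split => //; apply: mono.
Qed.

Lemma letterA p j : letter_at p j = LA -> is_red p j /\
  (forall t, t < j -> is_red p t -> nth 0 p j < nth 0 p t).
Proof.
rewrite /letter_at; case: ifP => // _; case: ifP => hr; last by case: ifP.
case: ifP => // /allP ha _; split => // t ht rt.
by have := ha t; rewrite mem_iota rt /=; apply; lia.
Qed.

Lemma letterB p j : uniq p -> j < size p -> letter_at p j = LB -> is_red p j /\
  exists t, [/\ t < j, is_red p t & nth 0 p t < nth 0 p j].
Proof.
move=> hu hj; rewrite /letter_at; case: ifP => // _; case: ifP => hr; last by case: ifP.
case: ifP => // /negbT /allPn [t]; rewrite mem_iota => /andP[_ ht].
rewrite negb_imply => /andP[rt]; rewrite -leqNgt => hle _; split => //; exists t; split => //.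
rewrite ltn_neqAle hle andbT; rewrite nth_uniq //; lia.
Qed.

Lemma letterC p j : uniq p -> letter_at p j = LC -> ~~ is_red p j /\
  exists q, [/\ j < q, q < size p, ~~ is_red p q & nth 0 p j < nth 0 p q].
Proof.
move=> hu; rewrite /letter_at; case: ifP => // _; case: ifP => hr; first by case: ifP.
case: ifP => // /negbT /allPn [q]; rewrite mem_iota => /andP[h1 h2].
rewrite negb_imply => /andP[rq]; rewrite -leqNgt => hle _; split => //; exists q.
have hq : q < size p by move: (h1 : j < (q:nat)) (h2 : (q:nat) < j.+1 + (size p - j.+1)); lia.
split => //.
rewrite ltn_neqAle hle andbT; rewrite nth_uniq //; lia.
Qed.

Lemma nth_w p j : j < size p -> nth LD (wword p) j = letter_at p j.
Proof. by move=> hj; rewrite /wword (nth_map 0) ?size_iota // nth_iota. Qed.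

Lemma nth_w_out p j : size p <= j -> nth LD (wword p) j = LD.
Proof. by move=> hj; rewrite nth_default // size_map size_iota. Qed.

Lemma main_claim p k r : avoids1324 p -> uniq p -> k.+1 < size p -> 0 < k ->
  letter_at p k.-1 = LC -> is_red p k -> letter_at p k.+1 = LB ->
  r < k -> is_red p r -> nth 0 p k.+1 < nth 0 p r.
Proof.
move=> hav hu hk k0 hC rk hB hr rr.
have dist : forall x y, x < size p -> y < size p -> x != y -> nth 0 p x != nth 0 p y.
  by move=> x y hx hy hxy; rewrite nth_uniq.
have [bk1 [q [hq1 hq2 bq hq3]]] := letterC hu hC.
have [rk1 _] := letterB hu hk hB.
have hk1 : k.-1 < size p by lia.
have [t1 [t2 [h12 h2 r1 r2 /andP[v1 v2]]]] := blue_132 hk1 bk1.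
have hqk : q <> k by move=> e; rewrite e rk in bq.
have hqk1 : q <> k.+1 by move=> e; rewrite e rk1 in bq.
have s1 : nth 0 p k.+1 < nth 0 p t2.
  rewrite ltnNge leq_eqVlt negb_or; apply/andP; split.
    by rewrite eq_sym dist //; lia.
  apply/negP => hlt; apply: hav; exists t1, t2, k.-1, k.+1; split; try lia.
  by split.
have s2 : nth 0 p k.+1 < nth 0 p t1.
  have := red_no132 hk rk1 h12 ltac:(lia) r1 r2; rewrite s1 andbT -leqNgt leq_eqVlt.
  case/orP => // /eqP e; exfalso; move: e; apply/eqP; rewrite eq_sym dist //; lia.
rewrite ltnNge leq_eqVlt negb_or; apply/andP; split.
  by rewrite dist //; lia.
apply/negP => hlt.
case: (ltngtP r t2) => hrt.
- have := red_no132 hk rk1 hrt ltac:(lia) rr r2; by rewrite hlt s1.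
- have hrk1 : r <> k.-1 by move=> e; rewrite e (negbTE bk1) in rr.
  apply: hav; exists r, k.-1, k.+1, q; split; [lia|lia|lia|exact: hq2|].
  split; lia.
- by rewrite hrt in hlt; lia.
Qed.

Lemma perm_facts p : is_perm p -> uniq p /\
  (forall j, j < size p -> 0 < nth 0 p j <= size p) /\
  (forall v, 0 < v <= size p -> index v p < size p /\ nth 0 p (index v p) = v).
Proof.
move=> hp; have hu : uniq p by rewrite (perm_uniq hp) iota_uniq.
split => //; split.
- move=> j hj; have := mem_nth 0 hj; rewrite (perm_mem hp) mem_iota; by rewrite -[1 + size p]/(size p).+1 ltnS.
- move=> v hv; have hm : v \in p by rewrite (perm_mem hp) mem_iota; lia.
  by rewrite index_mem nth_index.
Qed.

Lemma mem_posA_w p x : (x \in posA (wword p)) = (x < size p) && (letter_at p x == LA).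
Proof.
rewrite /posA mem_filter mem_iota size_map size_iota /=.
case: (ltnP x (size p)) => hx; last by rewrite andbF.
by rewrite nth_w // andbT.
Qed.

Lemma sorted_posA v : sorted ltn (posA v).
Proof. by apply: sorted_filter; [exact: ltn_trans | exact: iota_ltn_sorted]. Qed.

Lemma posA_z p : is_perm p ->
  posA (zword p) = rev (map (fun j => (nth 0 p j).-1) (posA (wword p))).
Proof.
move=> hp; have [hu [hv hi]] := perm_facts hp.
have sz : size (zword p) = size p by rewrite size_map size_iota.
have nz : forall v, v < size p -> nth LD (zword p) v = letter_at p (index v.+1 p).
  by move=> v hv'; rewrite (nth_map 0) ?size_iota // nth_iota // add1n.
apply: (irr_sorted_eq ltn_trans ltnn).
- exact: sorted_posA.
- rewrite rev_sorted; apply: (homo_sorted_in (P := mem (posA (wword p)))); last first.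
  + exact: sorted_posA.
  + exact/allP.
  move=> x y hx hy /= hxy.
  move: (hx) (hy); rewrite !mem_posA_w => /andP[hxs /eqP lx] /andP[hys /eqP ly].
  have [rx _] := letterA lx.
  have [_ hy'] := letterA ly.
  have := hy' x hxy rx; have := hv y hys; have := hv x hxs; lia.
- move=> v; rewrite mem_rev /posA mem_filter mem_iota sz /=.
  apply/idP/idP.
  + case/andP => /eqP hl hvs; rewrite nz // in hl.
    have [hix hnx] := hi v.+1 ltac:(lia).
    apply/mapP; exists (index v.+1 p); last by rewrite hnx.
    by rewrite mem_posA_w hix hl eqxx.
  + case/mapP => x; rewrite mem_posA_w => /andP[hx /eqP lx] ->.
    have := hv x hx => hb.
    have hlt : (nth 0 p x).-1 < size p by lia.
    rewrite hlt andbT nz // prednK; last by lia.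
    by rewrite index_uniq // lx.
Qed.

Theorem lemma3p1 (p : seq nat) (i : nat) :
  is_perm p -> avoids1324 p ->
  1 <= i -> i <= size (posA (wword p)) ->
  let k := nth 0 (rev (posA (wword p))) i.-1 in
  0 < k ->
  nth LD (wword p) k.-1 = LC ->
  nth LD (wword p) k.+1 = LB ->
  LB \in segment (zword p) i.-1.
Proof.
move=> hp hav hi1 hiL.
have [hu [hv hix]] := perm_facts hp.
set a := posA (wword p) in hiL *.
move=> k k0 hC hB.
have kE : k = nth 0 (rev a) i.-1 by [].
clearbody k.
have aE : a = posA (wword p) by [].
clearbody a.
have hk1 : k.+1 < size p.
  by case: (ltnP k.+1 (size p)) => // h; rewrite nth_w_out in hB.
have hkm1 : k.-1 < size p by lia.
rewrite nth_w // in hC; rewrite nth_w // in hB.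
have ka : k \in a.
  rewrite -mem_rev kE; apply: mem_nth; rewrite size_rev; change (i.-1 < @size nat a); lia.
have /andP[hks /eqP lk] : (k < size p) && (letter_at p k == LA) by rewrite -mem_posA_w -aE.
have [rk _] := letterA lk.
have [rk1 [t [ht rt hlt]]] := letterB hu hk1 hB.
have hkk1 : nth 0 p k < nth 0 p k.+1.
  case: (ltngtP t k) => htk.
  - have := main_claim hav hu hk1 k0 hC rk hB htk rt; lia.
  - lia.
  - by rewrite htk in hlt.
have sa : sorted ltn a by rewrite aE; exact: sorted_posA.
rewrite /segment posA_z // -aE -map_rev.
set f := fun j => (nth 0 p j).-1.
have sz : size (zword p) = size p by rewrite size_map size_iota.
have hs : nth 0 [seq f j | j <- rev a] i.-1 = f k.
  by rewrite (nth_map 0) ?kE // size_rev; lia.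
rewrite prednK // hs.
set e := nth (size (zword p)) [seq f j | j <- rev a] i.
have he : (nth 0 p k.+1).-1 < e.
  rewrite /e; case: (ltnP i (size a)) => hia.
  - rewrite (nth_map 0) ?size_rev //.
    set k' := nth 0 (rev a) i.
    have k'a : k' \in a by rewrite -mem_rev; apply: mem_nth; rewrite size_rev.
    have /andP[hk's /eqP lk'] : (k' < size p) && (letter_at p k' == LA) by rewrite -mem_posA_w -aE.
    have [rk' _] := letterA lk'.
    have hk'k : k' < k.
      rewrite /k' kE !nth_rev; try lia.
      apply: (sorted_ltn_nth ltn_trans 0 sa); rewrite ?inE; lia.
    have := main_claim hav hu hk1 k0 hC rk hB hk'k rk'.
    have := hv k.+1 hk1; rewrite /f; lia.
  - rewrite (nth_default _ (_ : size [seq f j | j <- rev a] <= i)); last by rewrite size_map size_rev.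
    rewrite ?sz ?size_map ?size_iota.
    have := hv k.+1 hk1; lia.
have hvk := hv k.+1 hk1.
have hvk0 := hv k hks.
have fk : f k = (nth 0 p k).-1 by [].
clearbody e f.
rewrite fk.
set v := nth 0 p k.+1 in hvk he hkk1 *.
set u := nth 0 p k in hvk0 hkk1 *.
have hz : nth LD (zword p) v.-1 = LB.
  rewrite (nth_map 0) ?size_iota; last by clear -hvk; lia.
  rewrite nth_iota; last by clear -hvk; lia.
  rewrite add1n prednK; last by clear -hvk; lia.
  by rewrite /v index_uniq.
have hidx : u.-1 + (v.-1 - u.-1) = v.-1 by clear -hkk1 hvk0; lia.
have hlt1 : v.-1 - u.-1 < e - u.-1 by clear -he hkk1 hvk0; lia.
have hlt2 : v.-1 - u.-1 < size (zword p) - u.-1 by rewrite sz; clear -hvk hkk1 hvk0; lia.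
have <- : nth LD (take (e - u.-1) (drop u.-1 (zword p))) (v.-1 - u.-1) = LB.
  by rewrite nth_take // nth_drop hidx.
apply: mem_nth; rewrite size_take size_drop.
by case: ifP.
Qed.
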